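(* Let $\mathbb A\in\mathcal K$ and let $S$ be a tolerance of $\mathbb A$ (a reflexive, symmetric, compatible binary relation). Suppose $d_0,d_1,\dots,d_k\in\mathbb A$ satisfy $(d_j,d_{j+1})\in S$ for all $j\in\{0,\dots,k-1\}$. If for some $i\in\{0,\dots,k\}$ there is $d'_i\in\mathbb A$ with $d_i\sqsubseteq d'_i$, then there are $d'_j\in\mathbb A$ for $j\in\{0,\dots,k\}\setminus\{i\}$ such that $d_j\sqsubseteq d'_j$ for all $j\in\{0,\dots,k\}$ and $(d'_j,d'_{j+1})\in S$ for all $j\in\{0,\dots,k-1\}$. Moreover, if $d_0,\dots,d_{i-1}$ are maximal elements of $\mathbb A$, then there are $d''_0,\dots,d''_k$ such that $d''_j=d_j$ for $j\in\{0,\dots,i-1\}$, $d_i\sqsubseteq d'_i\sqsubseteq d''_i$, $d_j\sqsubseteq d''_j$ for $j\in\{i+1,\dots,k\}$, and $(d''_j,d''_{j+1})\in S$ for all $j\in\{0,\dots,k-1\}$.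
   Context: All algebras are finite and idempotent. Edges: for elements $a,b$ of an algebra $\mathbb A$ let $\mathbb B=\mathrm{Sg}(a,b)$ (the generated subalgebra). The pair $ab$ is an edge if there is a maximal congruence $\theta$ of $\mathbb B$ such that either $\mathbb B/\theta$ is a set (unary type), or $\mathbb B/\theta$ is term equivalent to the full idempotent reduct of a module and some term operation $f$ induces on $\mathbb B/\theta$ the affine operation $x-y+z$ (affine type), or some term operation $f$ with $f/\theta$ a semilattice operation on $\{a/\theta,b/\theta\}$, or one with $f/\theta$ a majority operation on $\{a/\theta,b/\theta\}$. Semilattice type: the semilattice option holds for some $\theta$; majority type: not semilattice type and the majority option holds for some $\theta$; $\{a/\theta,b/\theta\}$ is a thick edge. $\mathbb A$ is smooth if for every edge $ab$ of semilattice or majority type with witness $\theta$, $a/\theta\cup b/\theta$ is a subalgebra. Standing assumption: $\mathcal K$ is a fixed finite class of similar smooth idempotent algebras, closed under subalgebras and homomorphic images, with no edges of unary type. Fixed binary term $\cdot$: semilattice operation on every thick semilattice edge of every algebra in $\mathcal K$, and for all $a,b$ either $a\cdot b=a$ or $(a,a\cdot b)$ is a thin semilattice edge. A thin semilattice edge is a pair $ab$ with $a\cdot b=b\cdot a=b$, written $a\le b$. An s-path is a sequence $a_0\le a_1\le\dots\le a_k$; $a\sqsubseteq b$ means there is an s-path from $a$ to $b$ in $\mathbb A$. $a$ is maximal if $a\sqsubseteq b$ implies $b\sqsubseteq a$. *)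

(* Defs.v *)
From mathcomp Require Import all_boot all_order all_algebra.
Set Implicit Arguments.
Unset Strict Implicit.
Unset Printing Implicit Defensive.
Import GRing.Theory.
Local Open Scope ring_scope.

Section UA.
Variables (F : Type) (ar : F -> nat).

Record algebra := Algebra {
  carrier :> finType;
  interp : forall f : F, {ffun 'I_(ar f) -> carrier} -> carrier }.
Arguments interp {a} f _.

Definition idempotent (A : algebra) : Prop :=
  forall (f : F) (x : A), interp f [ffun=> x] = x.

Inductive term : Type :=
| Var of nat
| App (f : F) of {ffun 'I_(ar f) -> term}.

Fixpoint teval (A : algebra) (v : nat -> A) (t : term) {struct t} : A :=
  match t with
  | Var i => v i
  | App f ts => interp f [ffun j => teval v (ts j)]
  end.

Definition val2 (A : algebra) (x y : A) : nat -> A :=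
  fun i => if i == 0%N then x else y.
Definition val3 (A : algebra) (x y z : A) : nat -> A :=
  fun i => if i == 0%N then x else if i == 1%N then y else z.

Definition bin (A : algebra) (t : term) (x y : A) : A := teval (val2 x y) t.
Definition tern (A : algebra) (t : term) (x y z : A) : A := teval (val3 x y z) t.

Section InAlgebra.
Variable A : algebra.

Definition subuniverse (P : A -> Prop) : Prop :=
  forall (f : F) (v : {ffun 'I_(ar f) -> A}), (forall j, P (v j)) -> P (interp f v).

Definition Sg2 (a b : A) : A -> Prop :=
  fun x => forall P, subuniverse P -> P a -> P b -> P x.

(* congruences of the subalgebra with universe B *)
Definition congruence (B : A -> Prop) (th : A -> A -> Prop) : Prop :=
  [/\ (forall x y, th x y -> B x /\ B y),
      (forall x, B x -> th x x),
      (forall x y, th x y -> th y x),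
      (forall x y z, th x y -> th y z -> th x z) &
      (forall (f : F) (v w : {ffun 'I_(ar f) -> A}),
          (forall j, th (v j) (w j)) -> th (interp f v) (interp f w))].

Definition max_congruence (B : A -> Prop) (th : A -> A -> Prop) : Prop :=
  [/\ congruence B th,
      (exists x y, [/\ B x, B y & ~ th x y]) &
      (forall eta, congruence B eta -> (forall x y, th x y -> eta x y) ->
          (forall x y, eta x y -> th x y) \/ (forall x y, B x -> B y -> eta x y))].

Definition valuation_in (B : A -> Prop) (v : nat -> A) := forall i, B (v i).

(* B/th is a set: every term operation is a projection *)
Definition quotient_is_set (B : A -> Prop) (th : A -> A -> Prop) : Prop :=
  forall t : term, exists i, forall v, valuation_in B v -> th (teval v t) (v i).

(* B/th is term equivalent to the full idempotent reduct of a module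
   (phi identifies B/th with the module M), and the term p induces x - y + z *)
Definition quotient_is_affine (B : A -> Prop) (th : A -> A -> Prop) : Prop :=
  exists (R : nzRingType) (M : lmodType R) (phi : A -> M),
  [/\ (forall x y, B x -> B y -> (phi x = phi y <-> th x y)),
      (forall m : M, exists2 x, B x & phi x = m),
      (forall t : term, exists n (r : 'I_n -> R), \sum_(i < n) r i = 1 /\
          forall v, valuation_in B v ->
            phi (teval v t) = \sum_(i < n) r i *: phi (v i)),
      (forall n (r : 'I_n -> R), \sum_(i < n) r i = 1 ->
          exists t : term, forall v, valuation_in B v ->
            phi (teval v t) = \sum_(i < n) r i *: phi (v i)) &
      (exists p : term, forall x y z, B x -> B y -> B z ->
          phi (tern p x y z) = phi x - phi y + phi z)].

Definition semilattice_on (th : A -> A -> Prop) (f : term) (a b : A) : Prop :=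
  th (bin f a b) (bin f b a) /\ (th (bin f a b) a \/ th (bin f a b) b).

Definition majority_on (th : A -> A -> Prop) (m : term) (a b : A) : Prop :=
  forall x y, (x = a \/ x = b) -> (y = a \/ y = b) ->
    [/\ th (tern m x x y) x, th (tern m x y x) x & th (tern m y x x) x].

Definition semilattice_option (a b : A) th : Prop :=
  exists f, semilattice_on th f a b.
Definition majority_option (a b : A) th : Prop :=
  exists m, majority_on th m a b.

Definition edge (a b : A) : Prop :=
  exists th, max_congruence (Sg2 a b) th /\
    [\/ quotient_is_set (Sg2 a b) th, quotient_is_affine (Sg2 a b) th,
        semilattice_option a b th | majority_option a b th].

Definition semilattice_type (a b : A) : Prop :=
  exists th, max_congruence (Sg2 a b) th /\ semilattice_option a b th.
Definition majority_type (a b : A) : Prop :=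
  ~ semilattice_type a b /\
  exists th, max_congruence (Sg2 a b) th /\ majority_option a b th.
Definition unary_type (a b : A) : Prop :=
  exists th, max_congruence (Sg2 a b) th /\ quotient_is_set (Sg2 a b) th.

Definition smooth : Prop :=
  forall a b th, max_congruence (Sg2 a b) th ->
    (semilattice_option a b th \/ (majority_type a b /\ majority_option a b th)) ->
    subuniverse (fun x => th x a \/ th x b).

Definition tolerance (S : A -> A -> Prop) : Prop :=
  [/\ (forall x, S x x), (forall x y, S x y -> S y x) &
      (forall (f : F) (v w : {ffun 'I_(ar f) -> A}),
          (forall j, S (v j) (w j)) -> S (interp f v) (interp f w))].

Definition thin_le (dot : term) (a b : A) : bool :=
  (bin dot a b == b) && (bin dot b a == b).
Definition sqle (dot : term) (a b : A) : bool := connect (thin_le dot) a b.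
Definition maximal (dot : term) (a : A) : Prop :=
  forall b, sqle dot a b -> sqle dot b a.

End InAlgebra.

Definition hom (A C : algebra) (h : A -> C) : Prop :=
  forall (f : F) (v : {ffun 'I_(ar f) -> A}),
    h (interp f v) = interp f [ffun j => h (v j)].
Definition iso (A C : algebra) : Prop :=
  exists h : A -> C, hom h /\ bijective h.

Definition standing_class (K : algebra -> Prop) : Prop :=
  [/\ (exists n (L : 'I_n -> algebra), forall A, K A -> exists j, iso A (L j)),
      (forall A, K A -> idempotent A /\ smooth A),
      (* closed under subalgebras (= algebras embeddable in a member) *)
      (forall (A C : algebra) (h : C -> A), K A -> hom h -> injective h -> K C),
      (forall (A C : algebra) (h : A -> C), K A -> hom h -> (forall y, exists x, h x = y) -> K C) &
      (forall A, K A -> forall a b : A, ~ unary_type a b)].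

Definition good_dot (K : algebra -> Prop) (dot : term) : Prop :=
  (forall A, K A -> forall (a b : A) th, max_congruence (Sg2 a b) th ->
      semilattice_option a b th -> semilattice_on th dot a b) /\
  (forall A, K A -> forall a b : A,
      bin dot a b = a \/ thin_le dot a (bin dot a b)).

End UA.

(* Main.v *)
Require Import Defs.
From mathcomp Require Import all_boot.
From mathcomp Require Import zify.

Lemma termS (F : Type) (ar : F -> nat) (A : algebra ar) (S : A -> A -> Prop)
  (HS : tolerance S) (v w : nat -> A) (Hvw : forall n, S (v n) (w n)) :
  forall t : term ar, S (teval v t) (teval w t).
Proof.
case: HS => _ _ HS3.
fix IH 1 => t; case: t => [n|f ts] /=; first exact: Hvw.
apply: HS3 => j; rewrite !ffunE; exact: IH.
Qed.

Lemma step_lem (F : Type) (ar : F -> nat) (K : algebra ar -> Prop)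
  (dot : term ar) (Hdot : good_dot K dot)
  (A : algebra ar) (HA : K A) (S : A -> A -> Prop) (HS : tolerance S)
  (a b c : A) : thin_le dot a b -> S a c ->
  S b (bin dot c b) /\ sqle dot c (bin dot c b).
Proof.
move=> /andP [/eqP Hab _] Sac; split.
  rewrite -[X in S X _]Hab /bin; apply: termS => // n.
  rewrite /val2; case: (n == 0%N) => //; by case: HS.
case: (Hdot.2 A HA c b) => [->|H]; first exact: connect0.
exact: connect1.
Qed.
Arguments step_lem {F ar K dot} Hdot {A} HA {S} HS {a b c}.

Lemma path_lem (F : Type) (ar : F -> nat) (K : algebra ar -> Prop)
  (dot : term ar) (Hdot : good_dot K dot)
  (A : algebra ar) (HA : K A) (S : A -> A -> Prop) (HS : tolerance S)
  (a a' c : A) : sqle dot a a' -> S a c ->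
  exists c', sqle dot c c' /\ S a' c'.
Proof.
move/connectP => [p Hp ->]; elim: p a c Hp => [|x p IH] a c /= Hp Sac.
  by exists c; split => //; exact: connect0.
case/andP: Hp => Hax Hp.
have [Sx Hc] := step_lem Hdot HA HS Hax Sac.
have [c' [Hc' S']] := IH _ _ Hp Sx.
exists c'; split => //; exact: connect_trans Hc Hc'.
Qed.
Arguments path_lem {F ar K dot} Hdot {A} HA {S} HS {a a' c}.

Lemma rprop (F : Type) (ar : F -> nat) (K : algebra ar -> Prop)
  (dot : term ar) (Hdot : good_dot K dot)
  (A : algebra ar) (HA : K A) (S : A -> A -> Prop) (HS : tolerance S)
  (k : nat) : forall n m (c : nat -> A) x, m + n = k ->
  (forall j, m <= j < k -> S (c j) (c j.+1)) -> sqle dot (c m) x ->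
  exists c' : nat -> A, [/\ forall j, j < m -> c' j = c j, c' m = x,
    forall j, m < j -> sqle dot (c j) (c' j) &
    forall j, m <= j < k -> S (c' j) (c' j.+1)].
Proof.
elim=> [|n IH] m c x Hk Hl Hx.
  exists (fun j => if j == m then x else c j); split => /=.
  - by move=> j Hj; have -> : (j == m) = false by lia.
  - by rewrite eqxx.
  - by move=> j Hj; rewrite ifN; [exact: connect0 | lia].
  - move=> j Hj; lia.
have Hm : m < k by lia.
have [y [Hy Sxy]] := path_lem Hdot HA HS Hx (Hl m ltac:(lia)).
have [c1 [E1 E2 E3 E4]] := IH m.+1 c y ltac:(lia) ltac:(move=> j Hj; apply: Hl; lia) Hy.
exists (fun j => if j == m then x else c1 j); split => /=.
- by move=> j Hj; rewrite ifN; last lia; apply: E1; lia.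
- by rewrite eqxx.
- move=> j Hj; have -> : (j == m) = false by lia.
  case: (ltngtP j m.+1) => H; [lia| exact: E3 | by rewrite H E2].
- move=> j Hj; case: (ltngtP j m) => H; first lia.
    have -> : (j.+1 == m) = false by lia.
    apply: E4; lia.
  rewrite H ifN; [by rewrite E2 | lia].
Qed.
Arguments rprop {F ar K dot} Hdot {A} HA {S} HS {k}.

Lemma lprop (F : Type) (ar : F -> nat) (K : algebra ar -> Prop)
  (dot : term ar) (Hdot : good_dot K dot)
  (A : algebra ar) (HA : K A) (S : A -> A -> Prop) (HS : tolerance S) :
  forall m (c : nat -> A) x,
  (forall j, j < m -> S (c j) (c j.+1)) -> sqle dot (c m) x ->
  exists c' : nat -> A, [/\ forall j, m < j -> c' j = c j, c' m = x,
    forall j, j < m -> sqle dot (c j) (c' j) &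
    forall j, j < m -> S (c' j) (c' j.+1)].
Proof.
have Hsym : forall x y, S x y -> S y x by case: HS.
elim=> [|m IH] c x Hl Hx.
  exists (fun j => if j == 0 then x else c j); split => //=.
  by move=> j Hj; have -> : (j == 0) = false by lia.
have [y [Hy Sxy]] := path_lem Hdot HA HS Hx (Hsym _ _ (Hl m ltac:(lia))).
have [c1 [E1 E2 E3 E4]] := IH c y ltac:(move=> j Hj; apply: Hl; lia) Hy.
exists (fun j => if j == m.+1 then x else c1 j); split => /=.
- move=> j Hj; rewrite ifN; last lia; apply: E1; lia.
- by rewrite eqxx.
- move=> j Hj; have -> : (j == m.+1) = false by lia.
  case: (ltngtP j m) => H; [exact: E3 | lia | by rewrite H E2].
- move=> j Hj; case: (ltngtP j m) => H; [|lia|].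
    have -> : (j == m.+1) = false by lia.
    have -> : (j.+1 == m.+1) = false by lia.
    exact: E4.
  rewrite H eqxx ifN; [rewrite E2; exact: Hsym | lia].
Qed.
Arguments lprop {F ar K dot} Hdot {A} HA {S} HS.

Theorem lemma21 (F : Type) (ar : F -> nat) (K : algebra ar -> Prop)
  (dot : term ar) (HK : standing_class K) (Hdot : good_dot K dot)
  (A : algebra ar) (HA : K A) (S : A -> A -> Prop) (HS : tolerance S)
  (k : nat) (d : nat -> A) (Hd : forall j, j < k -> S (d j) (d j.+1))
  (i : nat) (Hi : i <= k) (e : A) (He : sqle dot (d i) e) :
  (exists d' : nat -> A,
     [/\ d' i = e,
         (forall j, j <= k -> sqle dot (d j) (d' j)) &
         (forall j, j < k -> S (d' j) (d' j.+1))]) /\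
  ((forall j, j < i -> maximal dot (d j)) ->
   exists d'' : nat -> A,
     [/\ (forall j, j < i -> d'' j = d j),
         sqle dot e (d'' i),
         (forall j, i < j <= k -> sqle dot (d j) (d'' j)) &
         (forall j, j < k -> S (d'' j) (d'' j.+1))]).
Proof.
have part1 : exists d' : nat -> A,
     [/\ d' i = e,
         (forall j, j <= k -> sqle dot (d j) (d' j)) &
         (forall j, j < k -> S (d' j) (d' j.+1))].
  have [c1 [E1 E2 E3 E4]] := rprop Hdot HA HS (k:=k) (k - i) i d e ltac:(lia)
     ltac:(move=> j Hj; apply: Hd; lia) He.
  have [c2 [F1 F2 F3 F4]] := lprop Hdot HA HS i d e ltac:(move=> j Hj; apply: Hd; lia) He.
  exists (fun j => if j < i then c2 j else c1 j); split => /=.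
  - by rewrite ltnn.
  - move=> j Hj; case: (ltngtP j i) => H.
    + exact: F3.
    + exact: E3.
    + by rewrite H E2.
  - move=> j Hj; have [H1|H1] := boolP (j < i); have [H2|H2] := boolP (j.+1 < i);
      rewrite ?(negbTE H1) ?(negbTE H2) ?H1 ?H2.
    + exact: F4.
    + have H3 : j.+1 = i by lia.
      rewrite H3 E2 -F2 -H3; exact: F4.
    + lia.
    + apply: E4; lia.
split => // Hmax.
have inv : forall m, m <= i -> exists c : nat -> A,
  [/\ forall j, j < m -> c j = d j, sqle dot e (c i),
      forall j, j <= k -> sqle dot (d j) (c j) &
      forall j, j < k -> S (c j) (c j.+1)].
  elim=> [|m IH] Hm.
    have [d' [D1 D2 D3]] := part1.
    by exists d'; split => //; rewrite D1; exact: connect0.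
  have [c [C1 C2 C3 C4]] := IH ltac:(lia).
  have Hcm : sqle dot (c m) (d m) by apply: Hmax; [lia | apply: C3; lia].
  have [c' [E1 E2 E3 E4]] := rprop Hdot HA HS (k:=k) (k - m) m c (d m) ltac:(lia)
     ltac:(move=> j Hj; apply: C4; lia) Hcm.
  exists c'; split.
  - move=> j Hj; case: (ltngtP j m) => H; [by rewrite E1 // C1 | lia | by rewrite H E2].
  - apply: connect_trans C2 (E3 _ _); lia.
  - move=> j Hj; case: (ltngtP j m) => H.
    + rewrite E1 // C1 //; exact: connect0.
    + exact: connect_trans (C3 _ Hj) (E3 _ H).
    + rewrite H E2; exact: connect0.
  - move=> j Hj; case: (leqP m j) => H; first by apply: E4; lia.
    case: (ltngtP j.+1 m) => H2; [| lia |].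
    + rewrite !E1 //; exact: C4.
    + rewrite E1 // C1 // H2 E2 -H2; exact: Hd.
have [c [C1 C2 C3 C4]] := inv i (leqnn i).
exists c; split => // j /andP [_ Hj]; exact: C3.
Qed.
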